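(* Let $X$ be a convex subset of a real vector space, $I:X\to\mathbb{R}$ a convex function and $P:X\to]0,+\infty[$ a concave function. Then, for each $\mu>0$, a point $u\in X$ is a global minimum of the function $x\mapsto I(x)-\mu\log P(x)$ on $X$ if and only if $$I(u)\leq I(x)-\mu\left(\frac{P(x)}{P(u)}-1\right)$$ for all $x\in X$. *)

(* Defs.v *)
From HB Require Import structures.
From mathcomp Require Import all_boot all_order all_algebra.
From mathcomp Require Import all_classical all_reals.
From mathcomp Require Import exp.
Set Implicit Arguments. Unset Strict Implicit. Unset Printing Implicit Defensive.
Import Order.TTheory GRing.Theory Num.Theory.
Local Open Scope ring_scope.
Local Open Scope classical_set_scope.

Definition convex_subset (R : realType) (V : lmodType R) (X : set V) : Prop :=
  forall x y t, X x -> X y -> 0 <= t -> t <= 1 -> X (t *: x + (1 - t) *: y).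

Definition convex_on (R : realType) (V : lmodType R) (X : set V) (f : V -> R) : Prop :=
  forall x y t, X x -> X y -> 0 <= t -> t <= 1 ->
    f (t *: x + (1 - t) *: y) <= t * f x + (1 - t) * f y.

Definition concave_on (R : realType) (V : lmodType R) (X : set V) (f : V -> R) : Prop :=
  forall x y t, X x -> X y -> 0 <= t -> t <= 1 ->
    t * f x + (1 - t) * f y <= f (t *: x + (1 - t) *: y).

(* Main.v *)
Require Import Defs.
From HB Require Import structures.
From mathcomp Require Import all_boot all_order all_algebra.
From mathcomp Require Import all_classical all_reals.
From mathcomp Require Import exp.
From mathcomp Require Import ring lra.
Import Order.TTheory GRing.Theory Num.Theory.
Local Open Scope ring_scope.
Local Open Scope classical_set_scope.

Lemma ln_le_sub1 {R : realType} {x : R} : 0 < x -> ln x <= x - 1.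
Proof.
move=> x0; have := expR_ge1Dx (ln x); rewrite lnK ?posrE //; lra.
Qed.

Lemma small_t (R : realType) (c K : R) : 0 <= K ->
  (forall t, 0 < t -> t <= 1/2 -> c <= K * t) -> c <= 0.
Proof.
move=> K0 H; rewrite leNgt; apply/negP => c0.
pose t := Num.min (1/2) (c / (K + 1)).
have K1 : 0 < K + 1 by lra.
have t0 : 0 < t by rewrite lt_min; apply/andP; split; [lra| exact: divr_gt0].
have th : t <= 1/2 by rewrite ge_min lexx.
have tc : t <= c / (K + 1) by rewrite ge_min lexx orbT.
have := H t t0 th.
have : t * (K + 1) <= c by rewrite -ler_pdivlMr.
nra.
Qed.

Theorem theorem1p6 (R : realType) (V : lmodType R) (X : set V) (I P : V -> R)
  (hX : convex_subset X) (hI : convex_on X I) (hP : concave_on X P)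
  (hPpos : forall x, X x -> 0 < P x) (mu : R) (hmu : 0 < mu) (u : V) (hu : X u) :
  (forall x, X x -> I u - mu * ln (P u) <= I x - mu * ln (P x)) <->
  (forall x, X x -> I u <= I x - mu * (P x / P u - 1)).
Proof.
have Pu := hPpos u hu.
split; last first.
  move=> H x Xx; have Px := hPpos x Xx.
  have := H x Xx.
  have := ln_le_sub1 (divr_gt0 Px Pu).
  rewrite ln_div ?posrE //.
  nra.
move=> H x Xx; have Px := hPpos x Xx.
set D := P u - P x.
suff : I u - I x - mu * D / P u <= 0.
  have -> : P x / P u - 1 = - (D / P u) by rewrite /D; field; lra.
  rewrite mulrN -mulrA; lra.
apply: (@small_t _ _ (2 * mu * D ^+ 2 / (P u ^+ 2))).
  apply: divr_ge0; last by rewrite exprn_ge0 // ltW.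
  by apply: mulr_ge0; [lra| rewrite sqr_ge0].
move=> t t0 th.
have t1 : 0 <= t <= 1 by apply/andP; split; lra.
move/andP: t1 => [t0' t1].
have Xt := hX x u t Xx hu t0' t1.
have hIt := hI x u t Xx hu t0' t1.
have hPt := hP x u t Xx hu t0' t1.
have Ht := H _ Xt.
set q := t * P x + (1 - t) * P u.
have q0 : 0 < q by rewrite /q; nra.
have qD : q = P u - t * D by rewrite /q /D; ring.
have lnq : ln q <= ln (P (t *: x + (1 - t) *: u)).
  by rewrite ler_ln ?posrE //; apply: hPpos.
have lnl := ln_le_sub1 (divr_gt0 Pu q0).
rewrite ln_div ?posrE // in lnl.
have hq : P u / q * q = P u by rewrite mulfVK //; lra.
set w := P u / q in lnl hq.
have m1 : mu * ln q <= mu * ln (P (t *: x + (1 - t) *: u)) by rewrite ler_pM2l.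
have m2 : mu * (ln (P u) - ln q) <= mu * (w - 1) by rewrite ler_pM2l.
have e1 : t * (I u - I x) = t * I u - t * I x by ring.
have e2 : (1 - t) * I u = I u - t * I u by ring.
have ha : t * (I u - I x) <= mu * (w - 1).
  rewrite e1; rewrite e2 in hIt; rewrite mulrBr in m2; lra.
set a := I u - I x.
have hw : (w - 1) * q = t * D by rewrite mulrBl hq mul1r qD; ring.
have qge : P u <= 2 * q.
  rewrite /q; have : 0 <= t * P x by nra. have : 0 <= (1 - 2 * t) * P u by nra. nra.
have Pu2 : 0 < P u ^+ 2 by rewrite exprn_gt0.
rewrite [X in _ <= X]mulrAC ler_pdivlMr // -/a.
rewrite mulrBl [mu * D / P u * _]mulrAC -!mulrA divff ?mulr1; last by lra.
(* now: a * Pu^2 - mu * D * Pu <= 2 * mu * D^2 * t   roughly *)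
set L := a * P u ^+ 2 - mu * (D * P u).
set v := w - 1 in ha hw.
have s1 : t * L <= mu * v * P u ^+ 2 - mu * D * P u * t.
  have : t * a * P u ^+ 2 <= mu * v * P u ^+ 2 by rewrite ler_pM2r.
  rewrite /L; lra.
have s2 : q * (t * L) <= mu * D ^+ 2 * t ^+ 2 * P u.
  have : q * (t * L) <= q * (mu * v * P u ^+ 2 - mu * D * P u * t) by rewrite ler_pM2l.
  have -> : q * (mu * v * P u ^+ 2 - mu * D * P u * t) = mu * P u * (P u * (v * q) - D * t * q) by ring.
  rewrite hw qD.
  have -> : mu * P u * (P u * (t * D) - D * t * (P u - t * D)) = mu * D ^+ 2 * t ^+ 2 * P u by ring.
  by [].
have s3 : mu * D ^+ 2 * t ^+ 2 * P u <= q * t * (2 * (mu * (D * (D * t)))).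
  have h0 : 0 <= mu * D ^+ 2 * t ^+ 2 by apply: mulr_ge0; [apply: mulr_ge0; [lra| apply: sqr_ge0]| apply: sqr_ge0].
  have : mu * D ^+ 2 * t ^+ 2 * P u <= mu * D ^+ 2 * t ^+ 2 * (2 * q) by rewrite ler_wpM2l.
  have -> : q * t * (2 * (mu * (D * (D * t)))) = mu * D ^+ 2 * t ^+ 2 * (2 * q) by ring.
  by [].
have qt : 0 < q * t by apply: mulr_gt0.
rewrite -(ler_pM2l qt) -mulrA; exact: le_trans s2 s3.
Qed.
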